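(* Let $S$ be a modular lattice of finite length and let $(L_x)_{x\in S}$, $(\varphi_{yx})_{x\prec y}$ be a locally $S$-connected system. For $x<y$ in $S$ and a maximal chain $x=x_0\prec x_1\prec\cdots\prec x_n=y$, put $\varphi_{yx}:=\varphi_{x_nx_{n-1}}\circ\cdots\circ\varphi_{x_2x_1}\circ\varphi_{x_1x_0}$ (composition of partial maps), and put $\varphi_{xx}=\mathrm{id}_{L_x}$. Then $\varphi_{yx}$ does not depend on the choice of the maximal chain, and the lattices $L_x$ ($x\in S$) together with the maps $\varphi_{yx}$ ($x\le y$) form an $S$-connected system.
   Context: A \emph{partial bijection} $\varphi$ from a set $A$ to a set $B$ is a bijection from a subset $\operatorname{dom}\varphi\subseteq A$ onto a subset $\operatorname{im}\varphi\subseteq B$ (possibly empty); composites $\psi\circ\varphi$ of partial maps are defined at $a$ iff $a\in\operatorname{dom}\varphi$ and $\varphi(a)\in\operatorname{dom}\psi$, and equality of partial maps means equal domains and equal values. $x\prec y$ means $y$ covers $x$. For a modular lattice $S$ of finite length, a \emph{locally $S$-connected system} consists of lattices $L_x$ ($x\in S$) of finite length and partial bijections $\varphi_{yx}$ from $L_x$ to $L_y$ for all $x\prec y$ in $S$ such that for all $u,v,x,y\in S$ with $u\prec v$ and $x\wedge y\prec x$, $x\wedge y\prec y$, $x\prec x\vee y$, $y\prec x\vee y$: (22) $\varphi_{vu}$ is a lattice isomorphism from a nonempty filter of $L_u$ onto an ideal of $L_v$; (23) $\varphi_{(x\vee y)x}\circ\varphi_{x(x\wedge y)}=\varphi_{(x\vee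 y)y}\circ\varphi_{y(x\wedge y)}$, and this common partial map is denoted $\varphi_{(x\vee y)(x\wedge y)}$; (24) $\operatorname{im}\varphi_{(x\vee y)x}\cap\operatorname{im}\varphi_{(x\vee y)y}\subseteq\operatorname{im}\varphi_{(x\vee y)(x\wedge y)}$; (24$^\delta$) $\operatorname{dom}\varphi_{x(x\wedge y)}\cap\operatorname{dom}\varphi_{y(x\wedge y)}\subseteq\operatorname{dom}\varphi_{(x\vee y)(x\wedge y)}$. For a lattice $S$ of finite length, an \emph{$S$-connected system} consists of lattices $L_x$ ($x\in S$) of finite length and partial bijections $\varphi_{yx}$ from $L_x$ to $L_y$ for all $x\le y$ in $S$ such that for all $x,y\in S$: (17) if $\varphi_{yx}\ne\emptyset$ then $\operatorname{dom}\varphi_{yx}$ is a filter of $L_x$, $\operatorname{im}\varphi_{yx}$ is an ideal of $L_y$ and $\varphi_{yx}$ is a lattice isomorphism between them; $\varphi_{xx}=\mathrm{id}_{L_x}$; (18) if $x\prec y$ then $\varphi_{yx}\ne\emptyset$; (19) for $x\le z\le y$: $\varphi_{yx}=\varphi_{yz}\circ\varphi_{zx}$; (20) $\operatorname{im}\varphi_{(x\vee y)x}\cap\operatorname{im}\varphi_{(x\vee y)y}\subseteq\operatorname{im}\varphi_{(x\vee y)(x\wedge y)}$; (20$^\delta$) $\operatorname{dom}\varphi_{x(x\wedge y)}\cap\operatorname{dom}\varphi_{y(x\wedge y)}\subseteq\operatorname{dom}\varphi_{(x\vee y)(x\wedge y)}$. *)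

(* Defs.v *)
From HB Require Import structures.
From mathcomp Require Import all_boot all_order.
Set Implicit Arguments.
Unset Strict Implicit.
Unset Printing Implicit Defensive.
Import Order.Theory.
Local Open Scope order_scope.

Definition modular_lattice {d} (T : latticeType d) : Prop :=
  forall x y z : T, x <= z -> x `|` (y `&` z) = (x `|` y) `&` z.

Definition finite_length {d} (T : porderType d) : Prop :=
  exists n : nat, forall s : seq T, sorted <%O s -> (size s <= n)%N.

Definition covers {d} {T : porderType d} (x y : T) : Prop :=
  x < y /\ (forall z : T, x < z -> z < y -> False).

(* filters / ideals, possibly empty *)
Definition is_filter {d} {T : latticeType d} (P : T -> Prop) : Prop :=
  (forall a b : T, P a -> a <= b -> P b) /\
  (forall a b : T, P a -> P b -> P (a `&` b)).

Definition is_ideal {d} {T : latticeType d} (P : T -> Prop) : Prop :=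
  (forall a b : T, P b -> a <= b -> P a) /\
  (forall a b : T, P a -> P b -> P (a `|` b)).

Definition pdom {A B : Type} (f : A -> option B) (a : A) : Prop := f a <> None.
Definition pim {A B : Type} (f : A -> option B) (b : B) : Prop :=
  exists a, f a = Some b.
Definition pcomp {A B C : Type} (g : B -> option C) (f : A -> option B) :
  A -> option C := fun a => obind g (f a).
Definition pinjective {A B : Type} (f : A -> option B) : Prop :=
  forall a1 a2 b, f a1 = Some b -> f a2 = Some b -> a1 = a2.
Definition pempty {A B : Type} (f : A -> option B) : Prop :=
  forall a, f a = None.

Definition plattice_iso {d1 d2} {A : latticeType d1} {B : latticeType d2}
  (f : A -> option B) : Prop :=
  pinjective f /\
  (forall a1 a2 b1 b2, f a1 = Some b1 -> f a2 = Some b2 ->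
     f (a1 `&` a2) = Some (b1 `&` b2) /\ f (a1 `|` a2) = Some (b1 `|` b2)).

Definition filter_ideal_iso {d1 d2} {A : latticeType d1} {B : latticeType d2}
  (f : A -> option B) : Prop :=
  is_filter (pdom f) /\ is_ideal (pim f) /\ plattice_iso f.

Section Systems.
Variables (d : Order.disp_t) (S : latticeType d) (dL : S -> Order.disp_t).
Variable L : forall x : S, latticeType (dL x).

Definition diamond (x y : S) : Prop :=
  covers (x `&` y) x /\ covers (x `&` y) y /\ covers x (x `|` y) /\ covers y (x `|` y).

(* phi y x : L x -> option (L y) is  φ_{yx}; only used for x ≺ y *)
Definition locally_connected_system (phi : forall y x : S, L x -> option (L y)) : Prop :=
  (forall x, finite_length (L x)) /\
  (forall u v : S, covers u v ->
     (exists a, pdom (phi v u) a) /\ filter_ideal_iso (phi v u)) /\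
  (* (23) *)
  (forall x y : S, diamond x y ->
     pcomp (phi (x `|` y) x) (phi x (x `&` y)) =1
     pcomp (phi (x `|` y) y) (phi y (x `&` y))) /\
  (* (24) *)
  (forall x y : S, diamond x y -> forall b,
     pim (phi (x `|` y) x) b -> pim (phi (x `|` y) y) b ->
     pim (pcomp (phi (x `|` y) x) (phi x (x `&` y))) b) /\
  (* (24^delta) *)
  (forall x y : S, diamond x y -> forall a,
     pdom (phi x (x `&` y)) a -> pdom (phi y (x `&` y)) a ->
     pdom (pcomp (phi (x `|` y) x) (phi x (x `&` y))) a).

(* Phi y x : L x -> option (L y) is φ_{yx}; only used for x <= y *)
Definition connected_system (Phi : forall y x : S, L x -> option (L y)) : Prop :=
  (forall x, finite_length (L x)) /\
  (forall x y : S, x <= y -> pinjective (Phi y x)) /\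
  (forall x y : S, x <= y -> ~ pempty (Phi y x) -> filter_ideal_iso (Phi y x)) /\
  (forall x : S, Phi x x =1 (fun a => Some a)) /\
  (forall x y : S, covers x y -> ~ pempty (Phi y x)) /\
  (forall x z y : S, x <= z -> z <= y -> Phi y x =1 pcomp (Phi y z) (Phi z x)) /\
  (* (20) *)
  (forall x y : S, forall b,
     pim (Phi (x `|` y) x) b -> pim (Phi (x `|` y) y) b ->
     pim (Phi (x `|` y) (x `&` y)) b) /\
  (* (20^delta) *)
  (forall x y : S, forall a,
     pdom (Phi x (x `&` y)) a -> pdom (Phi y (x `&` y)) a ->
     pdom (Phi (x `|` y) (x `&` y)) a).

End Systems.

Inductive mchain {d} {S : porderType d} : S -> S -> Type :=
| mch_nil (x : S) : mchain x x
| mch_cons (x y z : S) : covers x y -> mchain y z -> mchain x z.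

Fixpoint chain_comp {d} {S : porderType d} {T : S -> Type}
  (phi : forall y x : S, T x -> option (T y)) (x z : S) (c : mchain x z)
  : T x -> option (T z) :=
  match c in mchain x z return T x -> option (T z) with
  | mch_nil x => fun a => Some a
  | mch_cons x y z _ c' => pcomp (chain_comp phi c') (phi y x)
  end.

Arguments diamond {d S} x y.
Arguments locally_connected_system {d S dL} L phi.
Arguments connected_system {d S dL} L Phi.

(* Main.v *)
Require Import Defs.
From HB Require Import structures.
From mathcomp Require Import all_boot all_order.
From Stdlib Require Import ClassicalEpsilon Classical FunctionalExtensionality.
Import Order.Theory.
Local Open Scope order_scope.
Set Implicit Arguments.
Unset Strict Implicit.
Fixpoint clen {d} {S : porderType d} (x y : S) (c : mchain x y) : nat :=
  match c with mch_nil _ => 0%N | mch_cons _ _ _ _ c' => (clen c').+1 end.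
Arguments clen {d S x y} c.

Section Chains.
Variables (d : Order.disp_t) (S : latticeType d).
Implicit Types x y z : S.
Fixpoint mcat x y z (c1 : mchain x y) : mchain y z -> mchain x z :=
  match c1 in mchain x y return mchain y z -> mchain x z with
  | mch_nil _ => fun c2 => c2
  | mch_cons a b _ H c => fun c2 => mch_cons H (mcat c c2)
  end.

Lemma mchain_ex_aux k : forall x y, x <= y ->
  (forall s : seq S, sorted <%O s -> all (fun t => (x <= t) && (t <= y)) s -> (size s <= k)%N) ->
  exists c : mchain x y, True.
Proof.
elim/ltn_ind: k => k IH x y Hxy Hb.
case: (eqVneq x y) => [<-|nxy]; first by exists (mch_nil x).
have lxy : x < y by rewrite lt_neqAle nxy.
case: (classic (covers x y)) => Hc; first by exists (mch_cons Hc (mch_nil y)).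
have [z [h1 h2]] : exists z, x < z /\ z < y.
  apply: NNPP => Hn; apply: Hc; split=> // z h1 h2; apply: Hn; by exists z.
have k0 : (0 < k)%N.
  by have := Hb [:: x] isT; rewrite /= lexx Hxy => /(_ isT).
have [c1 _] : exists c : mchain x z, True.
  apply: (IH k.-1); [by rewrite prednK ?leqnn | exact: ltW |].
  move=> s ss sa; have := Hb (rcons s y).
  rewrite size_rcons all_rcons lexx (ltW lxy) /=.
  rewrite (sorted_pairwise lt_trans) pairwise_rcons -(sorted_pairwise lt_trans) ss andbT.
  have -> : all (fun t => t < y) s.
    apply/allP => t ts; move/allP: sa => /(_ t ts) /andP [_ tz]; exact: le_lt_trans tz h2.
  have -> : all (fun t => (x <= t) && (t <= y)) s.
    apply/allP => t ts; move/allP: sa => /(_ t ts) /andP [-> tz] /=; exact: le_trans tz (ltW h2).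
  move=> /(_ isT isT); by case: k {IH Hb} k0.
have [c2 _] : exists c : mchain z y, True.
  apply: (IH k.-1); [by rewrite prednK ?leqnn | exact: ltW |].
  move=> s ss sa; have := Hb (x :: s).
  rewrite (sorted_pairwise lt_trans) pairwise_cons -(sorted_pairwise lt_trans) ss andbT.
  rewrite /= (ltW lxy) lexx /=.
  have -> : all (fun t => x < t) s.
    apply/allP => t ts; move/allP: sa => /(_ t ts) /andP [zt _]; exact: lt_le_trans h1 zt.
  have -> : all (fun t => (x <= t) && (t <= y)) s.
    apply/allP => t ts; move/allP: sa => /(_ t ts) /andP [zt ->]; rewrite andbT; exact: le_trans (ltW h1) zt.
  move=> /(_ isT isT); by case: k {IH Hb} k0.
by exists (mcat c1 c2).
Qed.

Lemma mchain_ex x y : finite_length S -> x <= y -> exists c : mchain x y, True.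
Proof.
move=> [n Hn] Hxy; apply: (mchain_ex_aux (k:=n)) => // s ss _; exact: Hn.
Qed.

Lemma cover_join x y m : modular_lattice S -> covers m x -> x `&` y = m -> covers y (x `|` y).
Proof.
move=> Hmod [mx Hc] Hm; split.
  rewrite lt_neqAle leUr andbT; apply/negP => /eqP E.
  have xy : x <= y by rewrite E leUl.
  by move: mx; rewrite -Hm (meet_l xy) ltxx.
move=> z yz zj.
have mzx : m <= z `&` x by rewrite lexI -Hm leIl andbT (le_trans (leIr _ _) (ltW yz)).
move: mzx; rewrite le_eqVlt => /predU1P [E|lt].
  have := Hmod y x z (ltW yz).
  have -> : x `&` z = m by rewrite meetC E.
  have -> : y `|` m = y by apply/join_l; rewrite -Hm leIr.
  rewrite joinC (meet_r (ltW zj)) => yzE.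
  by move: yz; rewrite yzE ltxx.
have zxx : z `&` x = x.
  apply/eqP; rewrite eq_le leIr /=; apply: contraT => nle.
  have : z `&` x < x by rewrite lt_neqAle leIr andbT; apply: contraNneq nle => ->.
  by move/(Hc _ lt).
have xz : x <= z by rewrite -zxx leIl.
have : x `|` y <= z by rewrite leUx xz ltW.
by move=> H; have := lt_le_trans zj H; rewrite ltxx.
Qed.


Lemma mchain_le x y (c : mchain x y) : x <= y.
Proof. elim: c => // a b e [H _] _ H2. exact: le_trans (ltW H) H2. Qed.

Lemma clen_mcat x y z (c1 : mchain x y) (c2 : mchain y z) :
  clen (mcat c1 c2) = (clen c1 + clen c2)%N.
Proof. by elim: c1 c2 => //= a b e H c IH c2; rewrite IH. Qed.

Lemma clen_pos x y (c : mchain x y) : x < y -> (0 < clen c)%N.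
Proof. by case: c => [a|//]; rewrite ltxx. Qed.

Lemma mchain_lt x y (c : mchain x y) : (0 < clen c)%N -> x < y.
Proof. case: c => //= a b e [H _] c' _. exact: lt_le_trans H (mchain_le c'). Qed.

Lemma clen_self x (c : mchain x x) : clen c = 0%N.
Proof.
case E: (clen c) => [//|n].
have := mchain_lt (c:=c); rewrite E => /(_ isT); by rewrite ltxx.
Qed.

End Chains.

Section PMaps.
Lemma pcompA (A B C D : Type) (f : A -> option B) (g : B -> option C) (h : C -> option D) :
  Defs.pcomp h (Defs.pcomp g f) =1 Defs.pcomp (Defs.pcomp h g) f.
Proof. by move=> a; rewrite /Defs.pcomp; case: (f a). Qed.

Lemma pcomp_ext (A B C : Type) (f f' : A -> option B) (g g' : B -> option C) :
  f =1 f' -> g =1 g' -> Defs.pcomp g f =1 Defs.pcomp g' f'.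
Proof. by move=> ef eg a; rewrite /Defs.pcomp ef; case: (f' a) => //= b; rewrite eg. Qed.

Lemma pcomp_id_l (A B : Type) (f : A -> option B) : Defs.pcomp (fun b => Some b) f =1 f.
Proof. by move=> a; rewrite /Defs.pcomp; case: (f a). Qed.
End PMaps.

Section PLI.
Variables (d1 d2 : Order.disp_t) (A : latticeType d1) (B : latticeType d2).
Lemma pli_mono (f : A -> option B) a1 a2 b1 b2 : plattice_iso f ->
  f a1 = Some b1 -> f a2 = Some b2 -> (a1 <= a2) = (b1 <= b2).
Proof.
move=> [inj hom] h1 h2; have [hm _] := hom _ _ _ _ h1 h2.
apply/idP/idP => le.
  move: hm; rewrite (meet_l le) h1 => -[E]; by rewrite E leIr.
rewrite (meet_l le) in hm; have := inj _ _ _ h1 hm => ->; exact: leIr.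
Qed.

End PLI.

Section FII.
Variables (d1 d2 d3 : Order.disp_t) (A : latticeType d1) (B : latticeType d2) (C : latticeType d3).

Lemma obindS (f : A -> option B) (g : B -> option C) a c :
  Defs.pcomp g f a = Some c -> exists b, f a = Some b /\ g b = Some c.
Proof. rewrite /Defs.pcomp; case: (f a) => //= b H; by exists b. Qed.

Lemma fii_id : filter_ideal_iso (fun a : A => Some a).
Proof.
split; [split=> // | split; [split | split]] => //.
- by move=> a b _ _; exists a.
- by move=> a b _ _; exists (a `|` b).
- by move=> a1 a2 b [->] [->].
- by move=> a1 a2 b1 b2 [->] [->].
Qed.

Lemma fii_comp (f : A -> option B) (g : B -> option C) :
  filter_ideal_iso f -> filter_ideal_iso g -> filter_ideal_iso (Defs.pcomp g f).
Proof.
move=> [[fup fmeet] [[fdown fjoin] [finj fhom]]] [[gup gmeet] [[gdown gjoin] [ginj ghom]]].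
have fpli : plattice_iso f by [].
have gpli : plattice_iso g by [].
have domP : forall a, pdom (Defs.pcomp g f) a -> exists b c, f a = Some b /\ g b = Some c.
  move=> a; rewrite /pdom /Defs.pcomp; case E: (f a) => [b|//] /=.
  case E2: (g b) => [c|//] _; by exists b, c.
have domI : forall a b c, f a = Some b -> g b = Some c -> pdom (Defs.pcomp g f) a.
  by move=> a b c h1 h2; rewrite /pdom /Defs.pcomp h1 /= h2.
split; [split | split; [split | split]].
- move=> a a' /domP [b [c [h1 h2]]] le.
  have : pdom f a' by apply: (fup a); rewrite // /pdom h1.
  rewrite /pdom; case E: (f a') => [b'|//] _.
  have bb : b <= b' by rewrite -(pli_mono fpli h1 E).
  have : pdom g b' by apply: (gup b); rewrite // /pdom h2.
  rewrite /pdom; case E2 : (g b') => [c'|//] _.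
  exact: domI E E2.
- move=> a1 a2 /domP [b1 [c1 [h1 h2]]] /domP [b2 [c2 [h3 h4]]].
  have [m1 _] := fhom _ _ _ _ h1 h3; have [m2 _] := ghom _ _ _ _ h2 h4.
  exact: domI m1 m2.
- move=> c' c [a /obindS [b [h1 h2]]] le.
  have : pim g c' by apply: (gdown c' c) => //; exists b.
  case=> b' hb'.
  have bb : b' <= b by rewrite (pli_mono gpli hb' h2).
  have : pim f b' by apply: (fdown b' b) => //; exists a.
  case=> a' ha'; exists a'; by rewrite /Defs.pcomp ha' /= hb'.
- move=> c1 c2 [a1 /obindS [b1 [h1 h2]]] [a2 /obindS [b2 [h3 h4]]].
  have [_ m1] := fhom _ _ _ _ h1 h3; have [_ m2] := ghom _ _ _ _ h2 h4.
  by exists (a1 `|` a2); rewrite /Defs.pcomp m1 /= m2.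
- move=> a1 a2 c /obindS [b1 [h1 h2]] /obindS [b2 [h3 h4]].
  have eb := ginj _ _ _ h2 h4; subst b2; exact: finj _ _ _ h1 h3.
- move=> a1 a2 c1 c2 /obindS [b1 [h1 h2]] /obindS [b2 [h3 h4]].
  have [m1 j1] := fhom _ _ _ _ h1 h3; have [m2 j2] := ghom _ _ _ _ h2 h4.
  by rewrite /Defs.pcomp m1 j1 /= m2 j2.
Qed.
End FII.

Unset Implicit Arguments.
Section Sys.
Variables (d : Order.disp_t) (S : latticeType d) (dL : S -> Order.disp_t).
Variable L : forall x : S, latticeType (dL x).
Variable phi : forall y x : S, L x -> option (L y).
Implicit Types x y z m j : S.
Hypothesis Hmod : modular_lattice S.
Hypothesis Hfin : finite_length S.
Hypothesis H23 : forall x y : S, diamond x y ->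
     Defs.pcomp (phi (x `|` y) x) (phi x (x `&` y)) =1
     Defs.pcomp (phi (x `|` y) y) (phi y (x `&` y)).

Lemma comp_mcat x y z (c1 : mchain x y) (c2 : mchain y z) :
  chain_comp phi (mcat c1 c2) =1 Defs.pcomp (chain_comp phi c2) (chain_comp phi c1).
Proof.
elim: c1 c2 => [a|a b e H c IH] c2 u //=.
rewrite /Defs.pcomp; case: (phi b a u) => //= v; exact: IH.
Qed.

Lemma H23' x y m j : x `&` y = m -> x `|` y = j -> covers m x -> covers m y ->
  Defs.pcomp (phi j x) (phi x m) =1 Defs.pcomp (phi j y) (phi y m).
Proof.
move=> Hm Hj cx cy; subst m j; apply: H23; split=> //; split=> //; split.
  by rewrite joinC; apply: (cover_join Hmod cy); rewrite meetC.
exact: (cover_join Hmod cx).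
Qed.

Lemma comp_len0 x y (c : mchain x y) : clen c = 0%N ->
  exists e : x = y, forall a, chain_comp phi c a = Some (@eq_rect S x L a y e).
Proof. by case: c => // a _; exists erefl. Qed.

Lemma comp_self x (c : mchain x x) : chain_comp phi c =1 (fun a => Some a).
Proof.
have [e He] := comp_len0 _ _ c (clen_self c) => a; rewrite He.
by rewrite (eq_irrelevance e (erefl x)).
Qed.

Lemma indep n : forall x y (c1 c2 : mchain x y), clen c1 = n ->
  clen c2 = n /\ chain_comp phi c1 =1 chain_comp phi c2.
Proof.
elim: n => [|n IH] x y c1 c2.
  move: c2; case: c1 => [x0 c2 _|? ? ? ? ? ? //].
  by split; [exact: clen_self | move=> a; rewrite (comp_self _ c2)].
move: c2; case: c1 => [x0 c2 //|x0 a y0 Ha c1' c2 /= [Hlen]].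
move: Ha c1' Hlen; case: c2 => [z0|z0 b w0 Hb c2'] Ha c1' Hlen.
  by have := lt_le_trans Ha.1 (mchain_le c1'); rewrite ltxx.
case: (eqVneq a b) => [eab|nab].
  subst b; have [l2 e2] := IH _ _ c1' c2' Hlen.
  by split; [rewrite /= l2 | apply: pcomp_ext].
have mab : a `&` b = z0.
  have : z0 <= a `&` b by rewrite lexI (ltW Ha.1) (ltW Hb.1).
  rewrite le_eqVlt => /predU1P [<-//|lt].
  have aab : a `&` b = a.
    apply/eqP; rewrite eq_le leIl /=; apply: contraT => nle.
    have : a `&` b < a by rewrite lt_neqAle leIl andbT; apply: contraNneq nle => ->.
    by move/(Ha.2 _ lt).
  have ab : a < b by rewrite lt_neqAle nab -aab leIr.
  by case: (Hb.2 _ Ha.1 ab).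
have caj : covers a (a `|` b).
  rewrite joinC; exact: cover_join Hmod Hb (etrans (meetC _ _) mab).
have cbj : covers b (a `|` b) := cover_join Hmod Ha mab.
have jy : a `|` b <= w0 by rewrite leUx (mchain_le c1') (mchain_le c2').
have [dch _] := mchain_ex Hfin jy.
have [l1 e1] := IH _ _ c1' (mch_cons caj dch) Hlen.
have [l2 e2] := IH _ _ (mch_cons cbj dch) c2' l1.
split; first by rewrite /= l2.
move=> u /=.
have E1 : forall v, chain_comp phi c1' v = obind (chain_comp phi dch) (phi _ a v) := e1.
have E2 : forall v, chain_comp phi c2' v = obind (chain_comp phi dch) (phi _ b v).
  by move=> v; rewrite -e2.
have H' : obind (phi _ a) (phi a z0 u) = obind (phi _ b) (phi b z0 u) :=
  H23' _ _ _ _ mab erefl Ha Hb u.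
rewrite /Defs.pcomp.
transitivity (obind (chain_comp phi dch) (obind (phi _ a) (phi a z0 u))).
  by case: (phi a z0 u) => //= v; rewrite E1.
rewrite H'; by case: (phi b z0 u) => //= v; rewrite E2.
Qed.

Definition Phi (y x : S) : L x -> option (L y) :=
  match excluded_middle_informative (exists c : mchain x y, True) with
  | left H => chain_comp phi (proj1_sig (constructive_indefinite_description _ H))
  | right _ => fun _ => None
  end.

Lemma PhiE x y (c : mchain x y) : Phi y x =1 chain_comp phi c.
Proof.
rewrite /Phi; case: excluded_middle_informative => [H|[]]; last by exists c.
move=> a; set c0 := proj1_sig _.
have [_ E] := indep (clen c0) x y c0 c erefl; exact: E.
Qed.

Lemma clen_uniq x y (c1 c2 : mchain x y) : clen c1 = clen c2.
Proof. by have [E _] := indep (clen c1) x y c1 c2 erefl. Qed.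

Lemma Phi_id x : Phi x x =1 (fun a => Some a).
Proof. exact: (PhiE x x (mch_nil x)). Qed.

Lemma Phi_trans x z y : x <= z -> z <= y -> Phi y x =1 Defs.pcomp (Phi y z) (Phi z x).
Proof.
move=> xz zy.
have [c1 _] := mchain_ex Hfin xz; have [c2 _] := mchain_ex Hfin zy.
move=> a; rewrite (PhiE _ _ (mcat c1 c2)) comp_mcat.
apply: pcomp_ext => u; [by rewrite (PhiE _ _ c1) | by rewrite (PhiE _ _ c2)].
Qed.

Lemma Phi_cov (u v : S) : covers u v -> Phi v u =1 phi v u.
Proof. move=> H a; rewrite (PhiE _ _ (mch_cons H (mch_nil v))) /=; exact: pcomp_id_l. Qed.

Hypothesis H22 : forall u v : S, covers u v ->
     (exists a, pdom (phi v u) a) /\ filter_ideal_iso (phi v u).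

Lemma comp_fii x y (c : mchain x y) : filter_ideal_iso (chain_comp phi c).
Proof.
elim: c => [a|a b e H c IH] /=; first exact: fii_id.
apply: fii_comp => //; exact: (H22 _ _ H).2.
Qed.

Lemma Phi_fii x y : x <= y -> filter_ideal_iso (Phi y x).
Proof.
move=> xy; have [c _] := mchain_ex Hfin xy.
have -> : Phi y x = chain_comp phi c by apply: functional_extensionality; exact: PhiE.
exact: comp_fii.
Qed.

Lemma Phi_inj x y : x <= y -> pinjective (Phi y x).
Proof. by move=> xy; have [_ [_ [? _]]] := Phi_fii x y xy. Qed.

Lemma split_sq x y m j x' (c : mchain m j) : x `&` y = m -> x `|` y = j -> m < x' -> x' < x ->
  [/\ x' `&` y = m, x `&` (x' `|` y) = x', x `|` (x' `|` y) = j,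
      (exists c1 : mchain m (x' `|` y), (clen c1 < clen c)%N) &
      (exists c2 : mchain x' j, (clen c2 < clen c)%N)].
Proof.
move=> Hm Hj mx' x'x.
have le1 : x' <= x := ltW x'x.
have e1 : x' `&` y = m.
  apply/eqP; rewrite eq_le; apply/andP; split.
    by rewrite -Hm leI2.
  by rewrite lexI (ltW mx') -Hm leIr.
have e2 : x `&` (x' `|` y) = x'.
  have := Hmod x' y x le1.
  rewrite (meetC y x) Hm (join_l (ltW mx')) => E; by rewrite meetC -E.
have e3 : x `|` (x' `|` y) = j by rewrite joinA (join_l le1).
have jj : x' `|` y <= j by rewrite -Hj leU2.
have jlt : x' `|` y < j.
  rewrite lt_neqAle jj andbT; apply/negP => /eqP E.
  by move: e2; rewrite E -Hj (meet_l (leUl _ _)) => E2; move: x'x; rewrite E2 ltxx.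
have mj' : m <= x' `|` y by rewrite (le_trans (ltW mx')) ?leUl.
have x'j : x' <= j by rewrite (le_trans le1) // -Hj leUl.
split=> //.
  have [c1 _] := mchain_ex Hfin mj'; have [c2 _] := mchain_ex Hfin jj.
  exists c1; rewrite (clen_uniq _ _ c (mcat c1 c2)) clen_mcat -{1}(addn0 (clen c1)) ltn_add2l.
  exact: clen_pos.
have [c1 _] := mchain_ex Hfin (ltW mx'); have [c2 _] := mchain_ex Hfin x'j.
exists c2; rewrite (clen_uniq _ _ c (mcat c1 c2)) clen_mcat -{1}(add0n (clen c2)) ltn_add2r.
exact: clen_pos.
Qed.

Lemma pim_ext (A B : Type) (f g : A -> option B) b : f =1 g -> pim f b -> pim g b.
Proof. by move=> E [a h]; exists a; rewrite -E. Qed.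

Lemma pdom_ext (A B : Type) (f g : A -> option B) a : f =1 g -> pdom f a -> pdom g a.
Proof. by move=> E; rewrite /pdom E. Qed.

Lemma diamond_of x y m j : x `&` y = m -> x `|` y = j -> covers m x -> covers m y ->
  covers x j /\ covers y j.
Proof.
move=> Hm Hj cx cy; subst j; split; last exact: cover_join Hmod cx Hm.
by rewrite joinC; apply: (cover_join Hmod cy); rewrite meetC.
Qed.

Lemma not_cov m x : m < x -> ~ covers m x -> exists x', m < x' /\ x' < x.
Proof.
move=> mx nc; apply: NNPP => Hn; apply: nc; split=> // z h1 h2; apply: Hn; by exists z.
Qed.

Hypothesis H24 : forall x y : S, diamond x y -> forall b,
     pim (phi (x `|` y) x) b -> pim (phi (x `|` y) y) b ->
     pim (Defs.pcomp (phi (x `|` y) x) (phi x (x `&` y))) b.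
Hypothesis H24d : forall x y : S, diamond x y -> forall a,
     pdom (phi x (x `&` y)) a -> pdom (phi y (x `&` y)) a ->
     pdom (Defs.pcomp (phi (x `|` y) x) (phi x (x `&` y))) a.

Lemma basic_le x y m j : x `&` y = m -> x `|` y = j ->
  [/\ m <= x, m <= y, x <= j & y <= j].
Proof. by move=> <- <-; rewrite leIl leIr leUl leUr. Qed.

Lemma P20 n : forall x y m j (c : mchain m j), clen c = n -> x `&` y = m -> x `|` y = j ->
  forall b, pim (Phi j x) b -> pim (Phi j y) b -> pim (Phi j m) b.
Proof.
elim/ltn_ind: n => n IH x y m j c Hc Hm Hj b hx hy.
have key : forall p q : S, p `&` q = m -> p `|` q = j -> pim (Phi j p) b -> pim (Phi j q) b ->
    forall x', m < x' -> x' < p -> pim (Phi j m) b.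
  move=> {hx hy Hm Hj} p q Hm Hj hx hy x' mx' x'p.
  have [e1 e2 e3 [c1 l1] [c2 l2]] := split_sq p q m j x' c Hm Hj mx' x'p.
  have [mx my xj yj] := basic_le p q m j Hm Hj.
  have [_ _ _ j'j] := basic_le p (x' `|` q) x' j e2 e3.
  have [_ _ x'j' yj'] := basic_le x' q m (x' `|` q) e1 erefl.
  case: hy => a ha; rewrite (Phi_trans q (x' `|` q) j yj' j'j) in ha.
  case/obindS: ha => c0 [hc0 hb].
  have hx' : pim (Phi j x') b.
    apply: (IH (clen c2) _ p (x' `|` q) x' j c2 erefl e2 e3 b hx); first by rewrite -Hc.
    by exists c0.
  case: hx' => a1; rewrite (Phi_trans x' (x' `|` q) j x'j' j'j) => /obindS [c1' [h1 h2]].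
  have ec := Phi_inj (x' `|` q) j j'j _ _ _ h2 hb; subst c1'.
  have [a2 h3] : pim (Phi (x' `|` q) m) c0.
    apply: (IH (clen c1) _ x' q m (x' `|` q) c1 erefl e1 erefl c0); first by rewrite -Hc.
      by exists a1.
    by exists a.
  exists a2; rewrite (Phi_trans m (x' `|` q) j (le_trans (ltW mx') x'j') j'j).
  by rewrite /Defs.pcomp h3 /= hb.
have [mx my xj yj] := basic_le x y m j Hm Hj.
case: (eqVneq x m) => [<-//|nxm]; case: (eqVneq y m) => [<-//|nym].
have mlx : m < x by rewrite lt_neqAle eq_sym nxm mx.
have mly : m < y by rewrite lt_neqAle eq_sym nym my.
case: (classic (covers m x)) => cx; last first.
  have [x' [h1 h2]] := not_cov m x mlx cx; exact: key x y Hm Hj hx hy x' h1 h2.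
case: (classic (covers m y)) => cy; last first.
  have [y' [h1 h2]] := not_cov m y mly cy.
  by apply: (key y x _ _ hy hx y' h1 h2); [rewrite meetC | rewrite joinC].
have [cxj cyj] := diamond_of x y m j Hm Hj cx cy.
have hx2 := @pim_ext _ _ _ _ _ (Phi_cov _ _ cxj) hx.
have hy2 := @pim_ext _ _ _ _ _ (Phi_cov _ _ cyj) hy.
have : pim (Defs.pcomp (phi j x) (phi x m)) b.
  move: hx2 hy2; subst m j; apply: H24; split=> //; split=> //.
apply: pim_ext => u; rewrite (Phi_trans m x j mx xj).
by apply: pcomp_ext => v; rewrite Phi_cov.
Qed.

Lemma P20d n : forall x y m j (c : mchain m j), clen c = n -> x `&` y = m -> x `|` y = j ->
  forall a, pdom (Phi x m) a -> pdom (Phi y m) a -> pdom (Phi j m) a.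
Proof.
elim/ltn_ind: n => n IH x y m j c Hc Hm Hj a hx hy.
have key : forall p q : S, p `&` q = m -> p `|` q = j -> pdom (Phi p m) a -> pdom (Phi q m) a ->
    forall x', m < x' -> x' < p -> pdom (Phi j m) a.
  move=> {hx hy Hm Hj} p q Hm Hj hx hy x' mx' x'p.
  have [e1 e2 e3 [c1 l1] [c2 l2]] := split_sq p q m j x' c Hm Hj mx' x'p.
  have [mp mq pj qj] := basic_le p q m j Hm Hj.
  have [x'p' _ _ j'j] := basic_le p (x' `|` q) x' j e2 e3.
  have [_ _ x'j' qj'] := basic_le x' q m (x' `|` q) e1 erefl.
  move: hx; rewrite /pdom (Phi_trans m x' p (ltW mx') x'p') /Defs.pcomp.
  case E: (Phi x' m a) => [c0|//] /= hx.
  have h1 : pdom (Phi (x' `|` q) m) a.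
    apply: (IH (clen c1) _ x' q m (x' `|` q) c1 erefl e1 erefl a); first by rewrite -Hc.
      by rewrite /pdom E.
    exact: hy.
  move: h1; rewrite /pdom (Phi_trans m x' (x' `|` q) (ltW mx') x'j') /Defs.pcomp E /= => h1.
  have h2 : pdom (Phi j x') c0.
    by apply: (IH (clen c2) _ p (x' `|` q) x' j c2 erefl e2 e3 c0); first by rewrite -Hc.
  by rewrite /pdom (Phi_trans m x' j (ltW mx') (le_trans x'j' j'j)) /Defs.pcomp E.
have [mx my xj yj] := basic_le x y m j Hm Hj.
case: (eqVneq x m) => [xm|nxm].
  have Ejy : j = y by rewrite -Hj; apply: join_r; rewrite xm.
  by rewrite Ejy.
case: (eqVneq y m) => [ym|nym].
  have Ejx : j = x by rewrite -Hj; apply: join_l; rewrite ym.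
  by rewrite Ejx.
have mlx : m < x by rewrite lt_neqAle eq_sym nxm mx.
have mly : m < y by rewrite lt_neqAle eq_sym nym my.
case: (classic (covers m x)) => cx; last first.
  have [x' [h1 h2]] := not_cov m x mlx cx; exact: key x y Hm Hj hx hy x' h1 h2.
case: (classic (covers m y)) => cy; last first.
  have [y' [h1 h2]] := not_cov m y mly cy.
  by apply: (key y x _ _ hy hx y' h1 h2); [rewrite meetC | rewrite joinC].
have [cxj cyj] := diamond_of x y m j Hm Hj cx cy.
have hx2 := @pdom_ext _ _ _ _ _ (Phi_cov _ _ cx) hx.
have hy2 := @pdom_ext _ _ _ _ _ (Phi_cov _ _ cy) hy.
have : pdom (Defs.pcomp (phi j x) (phi x m)) a.
  move: hx2 hy2; subst m j; apply: H24d; split=> //; split=> //.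
apply: pdom_ext => u; rewrite (Phi_trans m x j mx xj).
by apply: pcomp_ext => v; rewrite Phi_cov.
Qed.
End Sys.

Theorem theorem4p3 (d : Order.disp_t) (S : latticeType d)
  (dL : S -> Order.disp_t) (L : forall x : S, latticeType (dL x))
  (phi : forall y x : S, L x -> option (L y)) :
  modular_lattice S -> finite_length S ->
  locally_connected_system L phi ->
  exists Phi : forall y x : S, L x -> option (L y),
    (forall (x y : S) (c : mchain x y), Phi y x =1 chain_comp phi c) /\
    connected_system L Phi.
Proof.
move=> Hmod Hfin [HfL [H22 [H23 [H24 H24d]]]].
exists (Phi d S dL L phi); split.
  move=> x y c; exact: (PhiE _ _ _ _ _ Hmod Hfin H23 x y c).
split; first exact: HfL.
split.
  move=> x y xy; exact: (Phi_inj _ _ _ _ _ Hmod Hfin H23 H22 x y xy).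
split.
  move=> x y xy _; exact: (Phi_fii _ _ _ _ _ Hmod Hfin H23 H22 x y xy).
split.
  move=> x; exact: (Phi_id _ _ _ _ _ Hmod Hfin H23 x).
split.
  move=> x y cxy E; have [[a ha] _] := H22 x y cxy; apply: ha.
  by rewrite -(Phi_cov _ _ _ _ _ Hmod Hfin H23 x y cxy a); exact: E.
split.
  move=> x z y xz zy; exact: (Phi_trans _ _ _ _ _ Hmod Hfin H23 x z y xz zy).
have mj : forall x y : S, x `&` y <= x `|` y.
  move=> x y; exact: le_trans (leIl x y) (leUl x y).
split.
  move=> x y b; have [c _] := mchain_ex Hfin (mj x y).
  exact: (P20 _ _ _ _ _ Hmod Hfin H23 H22 H24 (clen c) x y _ _ c erefl erefl erefl b).
move=> x y a; have [c _] := mchain_ex Hfin (mj x y).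
exact: (P20d _ _ _ _ _ Hmod Hfin H23 H24d (clen c) x y _ _ c erefl erefl erefl a).
Qed.
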